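(* Let $H\neq\{1\}$ be a reduced atomic unit-cancellative finitely presented monoid, say $H=\langle \mathcal A(H)\mid x_1=y_1,\ldots,x_m=y_m\rangle$ with $(x_i,y_i)\in\sim_H$ for all $i$, and let $\mathsf d:\sim_H\to\mathbb N_0$ be a distance on $H$. Then \[\sup\Delta(H)\le \mathsf c_{\mathsf d}(H)\le \max\{\mathsf d(x_1,y_1),\ldots,\mathsf d(x_m,y_m)\}<\infty .\] Moreover, if $\mathsf c_{\mathsf d}(\pi(x_i))\ge \mathsf d(x_i,y_i)$ for every $i\in[1,m]$, then $\mathsf c_{\mathsf d}(H)=\max\{\mathsf d(x_1,y_1),\ldots,\mathsf d(x_m,y_m)\}$.
   Context: A monoid is an associative semigroup with identity; $H^\times$ is its unit group; $H$ is reduced if $H^\times=\{1\}$. $H$ is unit-cancellative if $a=au$ or $a=ua$ (with $a,u\in H$) implies $u\in H^\times$. Atoms and atomic are as usual ($\mathcal A(H)$ = set of atoms; atomic = every non-unit is a finite product of atoms). For reduced atomic $H$, the factorization monoid $\mathsf Z(H)$ is the free monoid on $\mathcal A(H)$ if $H$ is non-commutative and the free abelian monoid on $\mathcal A(H)$ if $H$ is commutative; $\pi:\mathsf Z(H)\to H$ is the canonical epimorphism and $|z|$ is the length of $z$. $\sim_H=\{(x,y)\in\mathsf Z(H)^2\mid\pi(x)=\pi(y)\}$. $H$ is finitely presented if $\mathcal A(H)$ is finite and there is a finite set $R=\{(x_1,y_1),\dots,(x_m,y_m)\}\subset\sim_H$ generating $\sim_H$ as a congruence (i.e. $\sim_H$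 is the transitive closure of the relation $x\sim y$ iff $x=sut$, $y=svt$ with $s,t\in\mathsf Z(H)$ and $(u,v)\in R\cup R^{-1}$ or $u=v$). A distance is a map $\mathsf d:\sim_H\to\mathbb N_0$ such that for all $(z,z'),(z,z''),(z'',z')\in\sim_H$: $\mathsf d(z,z)=0$; $\mathsf d(z,z')=\mathsf d(z',z)$; $\mathsf d(z,z')\le\mathsf d(z,z'')+\mathsf d(z'',z')$; $\mathsf d(xz,xz')=\mathsf d(zy,z'y)=\mathsf d(z,z')$ for all $x,y\in\mathsf Z(H)$; and $||z|-|z'||\le\mathsf d(z,z')\le\max\{|z|,|z'|,1\}$. For $a\in H$, the catenary degree $\mathsf c_{\mathsf d}(a)$ is the least $N\in\mathbb N_0\cup\{\infty\}$ such that any two factorizations $z,z'\in\pi^{-1}(a)$ can be joined by a chain $z=z_0,\dots,z_n=z'$ in $\pi^{-1}(a)$ with $\mathsf d(z_{i-1},z_i)\le N$; $\mathsf c_{\mathsf d}(H)=\sup_{a\in H}\mathsf c_{\mathsf d}(a)$. Sets of lengths: $\mathsf L(a)=\{|z|: z\in\pi^{-1}(a)\}$. For $L\subset\mathbb Z$, $d\in\mathbb N$ is a distance of $L$ if there is $x\in L$ with $[x,x+d]\cap L=\{x,x+d\}$; $\Delta(L)$ is the set of distances of $L$ and $\Delta(H)=\bigcup_{a\in H}\Delta(\mathsf L(a))$, with $\sup\emptyset=0$. *)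

(* Defs.v *)
From Stdlib Require Import Arith List Permutation Relations.
Import ListNotations.

Record Monoid := {
  car :> Type;
  mul : car -> car -> car;
  one : car;
  mulA : forall a b c, mul a (mul b c) = mul (mul a b) c;
  mul1l : forall a, mul one a = a;
  mulr1 : forall a, mul a one = a }.

Section Defs.
Variable H : Monoid.

Definition is_unit (u : H) : Prop :=
  exists v, mul H u v = one H /\ mul H v u = one H.
Definition reduced : Prop := forall u : H, is_unit u -> u = one H.
Definition unit_cancellative : Prop :=
  forall a u : H, (a = mul H a u \/ a = mul H u a) -> is_unit u.
Definition atom (a : H) : Prop :=
  ~ is_unit a /\ forall b c, a = mul H b c -> is_unit b \/ is_unit c.
Definition commutative : Prop := forall a b : H, mul H a b = mul H b a.

Definition pi (z : list H) : H := fold_right (mul H) (one H) z.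
Definition is_fact (z : list H) : Prop := Forall atom z.
Definition atomic : Prop :=
  forall a : H, ~ is_unit a -> exists z, z <> [] /\ is_fact z /\ pi z = a.
Definition finitely_many_atoms : Prop :=
  exists l : list H, forall a, atom a <-> In a l.

(* equality in Z(H): free monoid (words) if H is non-commutative,
   free abelian monoid (words up to permutation) if H is commutative *)
Definition zeq (z w : list H) : Prop :=
  is_fact z /\ is_fact w /\ (z = w \/ (commutative /\ Permutation z w)).

Definition simH (z w : list H) : Prop := is_fact z /\ is_fact w /\ pi z = pi w.

(* one elementary step of the congruence generated by R *)
Definition cstep (R : list (list H * list H)) (x y : list H) : Prop :=
  exists s t u v, is_fact s /\ is_fact t /\ is_fact u /\
    (In (u, v) R \/ In (v, u) R \/ u = v) /\
    zeq x (s ++ u ++ t) /\ zeq y (s ++ v ++ t).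

Definition presents (R : list (list H * list H)) : Prop :=
  (forall p, In p R -> simH (fst p) (snd p)) /\
  (forall x y, simH x y <-> clos_trans _ (cstep R) x y).

Definition distance (d : list H -> list H -> nat) : Prop :=
  (* well defined on Z(H) (relevant only in the commutative case) *)
  (forall z z' w w', simH z z' -> zeq z w -> zeq z' w' -> d z z' = d w w') /\
  (forall z, is_fact z -> d z z = 0) /\
  (forall z z', simH z z' -> d z z' = d z' z) /\
  (forall z z' z'', simH z z' -> simH z z'' -> d z z' <= d z z'' + d z'' z') /\
  (forall x y z z', is_fact x -> is_fact y -> simH z z' ->
      d (x ++ z) (x ++ z') = d z z' /\ d (z ++ y) (z' ++ y) = d z z') /\
  (forall z z', simH z z' ->
      length z - length z' <= d z z' /\ length z' - length z <= d z z' /\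
      d z z' <= Nat.max (Nat.max (length z) (length z')) 1).

Definition cat_step (d : list H -> list H -> nat) (a : H) (N : nat)
  (u v : list H) : Prop :=
  is_fact u /\ is_fact v /\ pi u = a /\ pi v = a /\ d u v <= N.

Definition chain_bound d (a : H) (N : nat) : Prop :=
  forall z z', is_fact z -> is_fact z' -> pi z = a -> pi z' = a ->
    clos_refl_trans_1n _ (cat_step d a N) z z'.

Definition catdeg_elem d (a : H) (n : nat) : Prop :=
  chain_bound d a n /\ forall m, chain_bound d a m -> n <= m.

Definition catdeg d (n : nat) : Prop :=
  (forall a : H, exists na, catdeg_elem d a na /\ na <= n) /\
  (forall m, (forall a na, catdeg_elem d a na -> na <= m) -> n <= m).

Definition lengths (a : H) (k : nat) : Prop :=
  exists z, is_fact z /\ pi z = a /\ length z = k.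

Definition in_Delta_L (a : H) (k : nat) : Prop :=
  0 < k /\ exists x, lengths a x /\ lengths a (x + k) /\
    forall y, x < y < x + k -> ~ lengths a y.

Definition in_Delta (k : nat) : Prop := exists a : H, in_Delta_L a k.

End Defs.

Definition maxR (H : Monoid) (d : list H -> list H -> nat)
  (R : list (list H * list H)) : nat :=
  fold_right Nat.max 0 (map (fun p => d (fst p) (snd p)) R).

(* Main.v *)
Require Import Defs.
From Stdlib Require Import Arith List Permutation Relations.
From Stdlib Require Import Lia Classical.
Import ListNotations.

Section Aux.
Variable H : Monoid.

Lemma pi_app (x y : list H) : pi H (x ++ y) = mul H (pi H x) (pi H y).
Proof.
  induction x as [|a x IH]; simpl. now rewrite mul1l. now rewrite IH, mulA.
Qed.

Lemma pi_perm (z w : list H) : commutative H -> Permutation z w -> pi H z = pi H w.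
Proof.
  intros Hc P; induction P; simpl; auto.
  - now rewrite IHP.
  - rewrite !mulA, (Hc x y); auto.
  - congruence.
Qed.

Lemma zeq_pi z w : zeq H z w -> pi H z = pi H w.
Proof. intros (_ & _ & [->|[Hc P]]); auto. now apply pi_perm. Qed.

Lemma zeq_sym z w : zeq H z w -> zeq H w z.
Proof.
  intros (A & B & [->|[Hc P]]); repeat split; auto.
  right; split; auto. now apply Permutation_sym.
Qed.

Lemma simH_sym z w : simH H z w -> simH H w z.
Proof. intros (A&B&C); repeat split; auto. Qed.

Lemma in_maxR d R p : In p R -> d (fst p) (snd p) <= maxR H d R.
Proof.
  unfold maxR in *; induction R as [|q R IH]; simpl in *; [tauto|].
  intros [->|Hin]; [lia|]. specialize (IH Hin). eapply Nat.le_trans; [exact IH|apply Nat.le_max_r].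
Qed.

Lemma maxR_le d R c : (forall p, In p R -> d (fst p) (snd p) <= c) -> maxR H d R <= c.
Proof.
  unfold maxR in *; induction R as [|q R IH]; simpl in *; intros Hp; [lia|].
  apply Nat.max_lub; auto.
Qed.

Lemma step_bound R d x y : presents H R -> distance H d -> cstep H R x y ->
  is_fact H x /\ is_fact H y /\ pi H x = pi H y /\ d x y <= maxR H d R.
Proof.
  intros [HR _] (D1 & D2 & D3 & D4 & D5 & D6).
  intros (s & t & u & v & Fs & Ft & Fu & Huv & Zx & Zy).
  assert (S : simH H u v /\ d u v <= maxR H d R).
  { destruct Huv as [Hin|[Hin|Heq]]; [| |subst v].
    - split. apply (HR _ Hin). apply (in_maxR d R _ Hin).
    - split. apply simH_sym, (HR _ Hin).
      rewrite D3 by (apply simH_sym, (HR _ Hin)). apply (in_maxR d R _ Hin).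
    - split. repeat split; auto. rewrite D2; auto; lia. }
  destruct S as [[_ [Fv Puv]] Duv].
  assert (Sut : simH H (u ++ t) (v ++ t)).
  { repeat split; try (apply Forall_app; auto). rewrite !pi_app; congruence. }
  assert (Sst : simH H (s ++ u ++ t) (s ++ v ++ t)).
  { repeat split; try (apply Forall_app; split; auto; apply Forall_app; auto).
    rewrite !pi_app; congruence. }
  pose proof Zx as [Fx _]; pose proof Zy as [Fy _].
  split; [auto|split;[auto|split]].
  - rewrite (zeq_pi _ _ Zx), (zeq_pi _ _ Zy), !pi_app; congruence.
  - rewrite <- (D1 _ _ _ _ Sst (zeq_sym _ _ Zx) (zeq_sym _ _ Zy)).
    destruct (D5 s [] _ _ Fs (Forall_nil _) Sut) as [-> _].
    destruct (D5 [] t _ _ (Forall_nil _) Ft (conj Fu (conj Fv Puv))) as [_ ->].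
    exact Duv.
Qed.

Lemma least_exists (P : nat -> Prop) n : P n -> exists m, P m /\ forall k, P k -> m <= k.
Proof.
  intros Pn. destruct (classic (exists m, P m /\ forall k, P k -> m <= k)) as [E|NE]; auto.
  exfalso. assert (forall j, ~ P j) as A.
  { intro j. induction j as [j IH] using (well_founded_ind lt_wf).
    intro Pj. apply NE. exists j; split; auto. intros k Pk.
    destruct (le_lt_dec j k); auto. exfalso; exact (IH k l Pk). }
  exact (A n Pn).
Qed.

Lemma chain_of R d a : presents H R -> distance H d -> forall x y,
  clos_trans _ (cstep H R) x y -> pi H x = a ->
  clos_refl_trans _ (cat_step H d a (maxR H d R)) x y /\ pi H y = a.
Proof.
  intros PR D x y C. induction C as [x y S|x y z C1 IH1 C2 IH2]; intros Pa.
  - destruct (step_bound R d x y PR D S) as (Fx & Fy & Pxy & Dxy).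
    split; [apply rt_step; repeat split; auto; congruence|congruence].
  - destruct (IH1 Pa) as [A1 B1]. destruct (IH2 B1) as [A2 B2].
    split; auto. eapply rt_trans; eauto.
Qed.

Lemma chain_bound_max R d a : presents H R -> distance H d ->
  chain_bound H d a (maxR H d R).
Proof.
  intros PR D z z' Fz Fz' Pz Pz'. apply clos_rt_rt1n.
  assert (S : simH H z z') by (repeat split; auto; congruence).
  apply (proj1 (proj2 PR z z')) in S. apply (proj1 (chain_of R d a PR D z z' S Pz)).
Qed.

Lemma chain_delta d a N k x : distance H d -> 0 < k ->
  (forall y, x < y < x + k -> ~ lengths H a y) ->
  forall z z', clos_refl_trans_1n _ (cat_step H d a N) z z' ->
  length z <= x -> x + k <= length z' -> k <= N.
Proof.
  intros D Hk Gap z z' C. induction C as [z|z y z' St C IH]; intros L1 L2.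
  - lia.
  - destruct St as (Fz & Fy & Pz & Py & Dzy).
    destruct (le_lt_dec (x + k) (length y)) as [Ly|Ly].
    + destruct D as (_&_&_&_&_&D6).
      assert (S : simH H z y) by (repeat split; auto; congruence).
      destruct (D6 _ _ S) as (_ & E & _). lia.
    + destruct (le_lt_dec (length y) x) as [Ly'|Ly']; [apply IH; auto|].
      exfalso. apply (Gap (length y)); [lia|]. exists y; auto.
Qed.

End Aux.

Theorem proposition3p4 (H : Monoid) (R : list (list H * list H))
  (d : list H -> list H -> nat) :
  (exists a : H, a <> one H) ->
  reduced H -> atomic H -> unit_cancellative H ->
  finitely_many_atoms H -> presents H R ->
  distance H d ->
  (exists c, catdeg H d c /\ (forall k, in_Delta H k -> k <= c) /\
             c <= maxR H d R) /\
  ((forall p, In p R -> forall n, catdeg_elem H d (pi H (fst p)) n ->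
        d (fst p) (snd p) <= n) ->
   catdeg H d (maxR H d R)).
Proof.
  intros _ _ _ _ _ PR D.
  set (M := maxR H d R).
  assert (EA : forall a, exists na, catdeg_elem H d a na /\ na <= M).
  { intro a. destruct (least_exists _ _ (chain_bound_max H R d a PR D)) as [na [A B]].
    exists na; split; [split; auto|]. apply B, chain_bound_max; auto. }
  assert (Part1 : exists c, catdeg H d c /\ (forall k, in_Delta H k -> k <= c) /\ c <= M).
  { assert (QM : forall a na, catdeg_elem H d a na -> na <= M).
    { intros a na [A B]. apply B, chain_bound_max; auto. }
    destruct (least_exists (fun m => forall a na, catdeg_elem H d a na -> na <= m) _ QM) as [c [Qc Lc]].
    exists c. split; [split|split].
    - intro a. destruct (EA a) as [na [E _]]. exists na; split; auto. eapply Qc; eauto.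
    - exact Lc.
    - intros k [a [Hk [x [[z [Fz [Pz Lz]]] [[z' [Fz' [Pz' Lz']]] Gap]]]]].
      destruct (EA a) as [na [CE _]].
      apply Nat.le_trans with na; [|exact (Qc a na CE)].
      destruct CE as [CB _].
      eapply (chain_delta H d a na k x D Hk Gap z z'); [apply CB; auto| lia | lia].
    - apply Lc, QM. }
  split; [exact Part1|].
  intros Hyp. destruct Part1 as [c [Cc [_ cM]]].
  assert (Mc : M <= c).
  { apply maxR_le. intros p Hp. destruct (EA (pi H (fst p))) as [na [E _]].
    apply Nat.le_trans with na; [apply (Hyp p Hp na E)|].
    destruct Cc as [C1 _]. destruct (C1 (pi H (fst p))) as [nb [Eb Lb]].
    assert (na = nb) as ->; auto.
    destruct E as [E1 E2], Eb as [Eb1 Eb2]. apply Nat.le_antisymm; auto. }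
  replace M with c by lia. exact Cc.
Qed.
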